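(* Let $G=(V,q)$ be a finite connected reversible graph with non-negative Ollivier curvature, and let $\lambda_1$ be the smallest non-zero eigenvalue of $-\Delta$. Then \[ \lambda_1\ge\log(2)\cdot\frac{q_{\min}}{\operatorname{diam}(G)^2}, \] where $\operatorname{diam}(G)=\max\{d(x,y):x,y\in V\}$.
   Context: A graph $G=(V,q)$: $V$ finite, $q:V\times V\to[0,\infty)$; Laplacian $\Delta f(x)=\sum_yq(x,y)(f(y)-f(x))$. Reversible: there is $m:V\to(0,\infty)$ with $q(x,y)m(x)=q(y,x)m(y)$. $d$ is the combinatorial graph distance ($x\sim y$ iff $q(x,y)>0$). $q_{\min}=\min\{q(x,y):q(x,y)>0\}$. For $x\ne y$, $\nabla_{xy}f=(f(x)-f(y))/d(x,y)$, $\|\nabla f\|_\infty=\sup_{x\ne y}|\nabla_{xy}f|$. Ollivier curvature $\kappa(x,y)=\inf\{\nabla_{xy}\Delta f:\|\nabla f\|_\infty=1,\ \nabla_{yx}f=1\}$; non-negative means $\kappa(x,y)\ge0$ for all $x\ne y$. *)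

(* Defs.v *)
From Stdlib Require Import Reals List Arith Bool.
Import ListNotations.
Open Scope R_scope.

(* A finite graph on vertex set V = {0,...,n-1} (vertices are naturals < n),
   with rates q : nat -> nat -> R (only values on V x V matter). *)

Definition vsum (n : nat) (F : nat -> R) : R :=
  fold_right Rplus 0 (map F (seq 0 n)).

Definition laplacian (n : nat) (q : nat -> nat -> R) (f : nat -> R) (x : nat) : R :=
  vsum n (fun y => q x y * (f y - f x)).

Definition adjb (q : nat -> nat -> R) (x y : nat) : bool :=
  if Rlt_dec 0 (q x y) then true else false.

Fixpoint reachb (n : nat) (q : nat -> nat -> R) (k x y : nat) : bool :=
  match k with
  | O => Nat.eqb x y
  | S k' => existsb (fun z => andb (adjb q x z) (reachb n q k' z y)) (seq 0 n)
  end.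

Fixpoint dist_aux (n : nat) (q : nat -> nat -> R) (x y k fuel : nat) : nat :=
  match fuel with
  | O => k
  | S f => if reachb n q k x y then k else dist_aux n q x y (S k) f
  end.

(* Combinatorial graph distance: least k with a k-step walk from x to y
   (a shortest walk in a connected graph on n vertices has < n steps). *)
Definition dist (n : nat) (q : nat -> nat -> R) (x y : nat) : nat :=
  dist_aux n q x y 0 n.

Inductive walk (n : nat) (q : nat -> nat -> R) : nat -> nat -> Prop :=
  | walk_refl : forall x, walk n q x x
  | walk_step : forall x z y, (z < n)%nat -> 0 < q x z -> walk n q z y -> walk n q x y.

Definition connected (n : nat) (q : nat -> nat -> R) : Prop :=
  forall x y, (x < n)%nat -> (y < n)%nat -> walk n q x y.

Definition reversible (n : nat) (q : nat -> nat -> R) : Prop :=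
  exists m : nat -> R,
    (forall x, (x < n)%nat -> 0 < m x) /\
    (forall x y, (x < n)%nat -> (y < n)%nat -> q x y * m x = q y x * m y).

Definition grad (n : nat) (q : nat -> nat -> R) (f : nat -> R) (x y : nat) : R :=
  (f x - f y) / INR (dist n q x y).

(* ||∇f||_∞ = sup_{x≠y} |∇_{xy} f|  (a maximum, V being finite) equals 1. *)
Definition grad_sup_eq1 (n : nat) (q : nat -> nat -> R) (f : nat -> R) : Prop :=
  (forall u v, (u < n)%nat -> (v < n)%nat -> u <> v -> Rabs (grad n q f u v) <= 1) /\
  (exists u v, (u < n)%nat /\ (v < n)%nat /\ u <> v /\ Rabs (grad n q f u v) = 1).

(* κ(x,y) = inf { ∇_{xy}Δf : ||∇f||_∞ = 1, ∇_{yx} f = 1 } >= 0, i.e. every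
   element of the set is >= 0. *)
Definition ollivier_nonneg_at (n : nat) (q : nat -> nat -> R) (x y : nat) : Prop :=
  forall f : nat -> R,
    grad_sup_eq1 n q f -> grad n q f y x = 1 ->
    0 <= grad n q (laplacian n q f) x y.

Definition ollivier_nonneg (n : nat) (q : nat -> nat -> R) : Prop :=
  forall x y, (x < n)%nat -> (y < n)%nat -> x <> y -> ollivier_nonneg_at n q x y.

Definition vpairs (n : nat) : list (nat * nat) := list_prod (seq 0 n) (seq 0 n).

(* q_min = min { q(x,y) : q(x,y) > 0 }  (0 if there is no edge). *)
Definition qmin (n : nat) (q : nat -> nat -> R) : R :=
  match map (fun p => q (fst p) (snd p))
            (filter (fun p => adjb q (fst p) (snd p)) (vpairs n)) with
  | [] => 0
  | h :: t => fold_right Rmin h t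
  end.

Definition diam (n : nat) (q : nat -> nat -> R) : nat :=
  fold_right Nat.max 0%nat (map (fun p => dist n q (fst p) (snd p)) (vpairs n)).

Definition is_eigenvalue_negLap (n : nat) (q : nat -> nat -> R) (lam : R) : Prop :=
  exists f : nat -> R,
    (exists x, (x < n)%nat /\ f x <> 0) /\
    (forall x, (x < n)%nat -> - laplacian n q f x = lam * f x).

(* Main.v *)
Require Import Defs.
From Stdlib Require Import Reals List Arith.
From Stdlib Require Import Bool Lra Lia Psatz Classical.
Require Import Defs.
Import ListNotations.
Open Scope R_scope.

Lemma adjb_pos q x z : adjb q x z = true -> 0 < q x z.
Proof. unfold adjb; destruct (Rlt_dec 0 (q x z)); auto; discriminate. Qed.
Lemma pos_adjb q x z : 0 < q x z -> adjb q x z = true.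
Proof. unfold adjb; destruct (Rlt_dec 0 (q x z)); auto; contradiction. Qed.

Lemma reach_concat n q k1 : forall k2 x y z, reachb n q k1 x y = true ->
  reachb n q k2 y z = true -> reachb n q (k1+k2) x z = true.
Proof.
induction k1 as [|k IH]; intros k2 x y z H1 H2; simpl in *.
- apply Nat.eqb_eq in H1; subst; exact H2.
- apply existsb_exists in H1. destruct H1 as [w [Hw Hb]].
  apply andb_true_iff in Hb. destruct Hb as [Ha Hr].
  apply existsb_exists. exists w. split; [exact Hw|].
  apply andb_true_iff. split; [exact Ha| eapply IH; eauto].
Qed.

Lemma reach1 n q x w : (w < n)%nat -> 0 < q x w -> reachb n q 1 x w = true.
Proof.
intros Hw Hq. simpl. apply existsb_exists. exists w. split.
- apply in_seq; lia.
- rewrite pos_adjb; auto. simpl. apply Nat.eqb_refl.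
Qed.

Lemma rev_adj n q (Hrev : reversible n q) x w : (x<n)%nat -> (w<n)%nat -> 0 < q x w -> 0 < q w x.
Proof.
intros Hx Hw Hq. destruct Hrev as [m [Hm Hs]]. specialize (Hs x w Hx Hw).
pose proof (Hm x Hx). pose proof (Hm w Hw).
destruct (Rle_lt_dec (q w x) 0); [|auto]. nra.
Qed.

Lemma reach_sym n q (Hrev : reversible n q) k : forall x y, (x<n)%nat ->
  reachb n q k x y = true -> reachb n q k y x = true.
Proof.
induction k as [|k IH]; intros x y Hx H; simpl in H.
- apply Nat.eqb_eq in H; subst. simpl; apply Nat.eqb_refl.
- apply existsb_exists in H. destruct H as [w [Hw Hb]].
  apply andb_true_iff in Hb. destruct Hb as [Ha Hr].
  apply in_seq in Hw.
  pose proof (IH w y ltac:(lia) Hr) as H1.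
  pose proof (reach1 n q w x Hx (rev_adj n q Hrev x w Hx ltac:(lia) (adjb_pos _ _ _ Ha))) as H2.
  pose proof (reach_concat n q k 1 y w x H1 H2) as H3.
  rewrite Nat.add_1_r in H3. exact H3.
Qed.

Lemma walk_reach n q x y : walk n q x y -> exists k, reachb n q k x y = true.
Proof.
intros H; induction H as [x|x z y Hz Hqz Hw IH].
- exists 0%nat; simpl; apply Nat.eqb_refl.
- destruct IH as [k Hk]. exists (S k). simpl. apply existsb_exists. exists z. split.
  + apply in_seq; lia.
  + rewrite pos_adjb; auto.
Qed.

Definition pwalk n q (p : nat -> nat) k := forall i, (i < k)%nat ->
  (p (S i) < n)%nat /\ 0 < q (p i) (p (S i)).

Lemma reach_pwalk n q k : forall x y, reachb n q k x y = true ->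
  exists p, p 0%nat = x /\ p k = y /\ pwalk n q p k.
Proof.
induction k as [|k IH]; intros x y H; simpl in H.
- apply Nat.eqb_eq in H; subst. exists (fun _ => y). split; [reflexivity|split; [reflexivity| intros i0 Hi; lia]].
- apply existsb_exists in H. destruct H as [w [Hw Hb]].
  apply andb_true_iff in Hb. destruct Hb as [Ha Hr]. apply in_seq in Hw.
  destruct (IH w y Hr) as [p [Hp0 [Hpk Hpw]]].
  exists (fun i => match i with O => x | S j => p j end). split; [reflexivity|split; [exact Hpk|]].
  intros i Hi. destruct i as [|j].
  + rewrite Hp0. split; [lia| apply adjb_pos; auto].
  + apply Hpw; lia.
Qed.

Lemma pwalk_reach n q k : forall p x y, p 0%nat = x -> p k = y -> pwalk n q p k ->
  reachb n q k x y = true.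
Proof.
induction k as [|k IH]; intros p x y H0 Hk Hw; simpl.
- rewrite <- H0, <- Hk. apply Nat.eqb_refl.
- apply existsb_exists. exists (p 1%nat). destruct (Hw 0%nat ltac:(lia)) as [H1 H2].
  split; [apply in_seq; lia|]. apply andb_true_iff; split.
  + apply pos_adjb. subst; auto.
  + apply (IH (fun i => p (S i))); auto. intros i Hi. apply Hw. lia.
Qed.

Lemma pigeon n (p : nat -> nat) k : (n <= k)%nat -> (forall i, (i <= k)%nat -> (p i < n)%nat) ->
  exists i j, (i < j)%nat /\ (j <= k)%nat /\ p i = p j.
Proof.
intros Hk Hp.
assert (Hnd : ~ NoDup (map p (seq 0 (S k)))).
{ intro Hnd. assert (Hi : incl (map p (seq 0 (S k))) (seq 0 n)).
  { intros a Ha. apply in_map_iff in Ha. destruct Ha as [i [Hi1 Hi2]]. apply in_seq in Hi2.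
    subst. apply in_seq. specialize (Hp i ltac:(lia)). lia. }
  pose proof (NoDup_incl_length Hnd Hi) as HL. rewrite length_map, !length_seq in HL. lia. }
apply NNPP. intro Hno. apply Hnd. apply (NoDup_nth _ (p 0%nat)).
rewrite length_map, length_seq. intros i j Hi Hj Heq.
rewrite !map_nth, !seq_nth in Heq by lia. simpl in Heq.
destruct (lt_eq_lt_dec i j) as [[Hl|He]|Hl]; auto.
- exfalso. apply Hno. exists i, j. repeat split; auto; lia.
- exfalso. apply Hno. exists j, i. repeat split; auto; lia.
Qed.

Lemma shortcut n q p k i j : (i < j)%nat -> (j <= k)%nat -> p i = p j -> pwalk n q p k ->
  pwalk n q (fun m => if Nat.leb m i then p m else p (m + (j - i))%nat) (k - (j - i)).
Proof.
intros Hij Hjk Heq Hw m Hm.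
destruct (Nat.leb_spec (S m) i) as [H1|H1]; destruct (Nat.leb_spec m i) as [H2|H2]; try lia.
- apply Hw; lia.
- assert (m = i) by lia. subst m. rewrite Heq.
  replace (S i + (j - i))%nat with (S j) by lia. apply Hw; lia.
- replace (S m + (j - i))%nat with (S (m + (j - i))) by lia. apply Hw; lia.
Qed.

Lemma reach_short n q x y k : (x < n)%nat -> reachb n q k x y = true ->
  exists j, (j < n)%nat /\ reachb n q j x y = true.
Proof.
intros Hx. induction k as [k IH] using lt_wf_ind. intros H.
destruct (lt_dec k n) as [Hl|Hl]; [exists k; auto|].
destruct (reach_pwalk n q k x y H) as [p [Hp0 [Hpk Hpw]]].
destruct (pigeon n p k ltac:(lia)) as [i [j [Hij [Hjk Heq]]]].
{ intros i Hi. destruct i as [|i']; [lia|]. apply Hpw; lia. }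
apply (IH (k - (j - i))%nat ltac:(lia)).
apply (pwalk_reach n q _ (fun m => if Nat.leb m i then p m else p (m + (j - i))%nat)).
- simpl. auto.
- destruct (Nat.leb_spec (k - (j - i)) i).
  + replace (k - (j - i))%nat with i by lia. rewrite Heq. replace j with k by lia. auto.
  + replace (k - (j - i) + (j - i))%nat with k by lia. auto.
- apply shortcut; auto.
Qed.

Lemma dist_aux_spec n q x y : forall fuel k,
  (k <= dist_aux n q x y k fuel)%nat /\ (dist_aux n q x y k fuel <= k + fuel)%nat /\
  (forall j, (k <= j < dist_aux n q x y k fuel)%nat -> reachb n q j x y = false) /\
  ((dist_aux n q x y k fuel < k + fuel)%nat -> reachb n q (dist_aux n q x y k fuel) x y = true).
Proof.
induction fuel as [|f IH]; intros k; simpl.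
- split; [lia|split; [lia|split; [intros j Hj; lia| intros; lia]]].
- destruct (reachb n q k x y) eqn:E.
  + split; [lia|split;[lia|split;[intros j Hj; lia| intros; exact E]]].
  + destruct (IH (S k)) as [A [B [C D]]]. split; [lia|split; [lia|split]].
    * intros j Hj. destruct (Nat.eq_dec j k); [subst; auto| apply C; lia].
    * intros Hl. apply D. lia.
Qed.

Lemma dist_le n q x y j : reachb n q j x y = true -> (dist n q x y <= j)%nat.
Proof.
intros H. unfold dist. destruct (dist_aux_spec n q x y n 0) as [A [B [C D]]].
destruct (le_lt_dec (dist_aux n q x y 0 n) j); auto.
rewrite C in H; [discriminate| lia].
Qed.

Lemma dist_reach n q (Hconn : connected n q) x y : (x<n)%nat -> (y<n)%nat ->
  (dist n q x y < n)%nat /\ reachb n q (dist n q x y) x y = true.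
Proof.
intros Hx Hy. destruct (walk_reach n q x y (Hconn x y Hx Hy)) as [k Hk].
destruct (reach_short n q x y k Hx Hk) as [j [Hj Hr]].
pose proof (dist_le n q x y j Hr).
split; [lia|]. unfold dist in *. destruct (dist_aux_spec n q x y n 0) as [A [B [C D]]].
apply D. lia.
Qed.

Lemma dist_refl n q x : dist n q x x = 0%nat.
Proof. pose proof (dist_le n q x x 0). simpl in H. rewrite Nat.eqb_refl in H. specialize (H eq_refl). lia. Qed.

Lemma dist_pos n q (Hconn : connected n q) x y : (x<n)%nat -> (y<n)%nat -> x <> y -> (1 <= dist n q x y)%nat.
Proof.
intros Hx Hy Hne. destruct (dist_reach n q Hconn x y Hx Hy) as [_ H].
destruct (dist n q x y) eqn:E; [|lia]. simpl in H. apply Nat.eqb_eq in H. contradiction.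
Qed.

Lemma dist_tri n q (Hconn : connected n q) x y z : (x<n)%nat -> (y<n)%nat -> (z<n)%nat ->
  (dist n q x z <= dist n q x y + dist n q y z)%nat.
Proof.
intros Hx Hy Hz. apply dist_le. eapply reach_concat.
- apply (dist_reach n q Hconn x y Hx Hy).
- apply (dist_reach n q Hconn y z Hy Hz).
Qed.

Lemma dist_sym n q (Hconn : connected n q) (Hrev : reversible n q) x y : (x<n)%nat -> (y<n)%nat ->
  dist n q x y = dist n q y x.
Proof.
intros Hx Hy. apply Nat.le_antisymm; apply dist_le; apply reach_sym; auto;
  apply dist_reach; auto.
Qed.

Lemma dist_adj n q x w : (w<n)%nat -> 0 < q x w -> (dist n q x w <= 1)%nat.
Proof. intros. apply dist_le, reach1; auto. Qed.

Lemma dist_geo n q (Hconn : connected n q) x y : (x<n)%nat -> (y<n)%nat -> x <> y ->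
  exists w, (w < n)%nat /\ 0 < q x w /\ (dist n q w y + 1 <= dist n q x y)%nat.
Proof.
intros Hx Hy Hne. pose proof (dist_pos n q Hconn x y Hx Hy Hne) as Hp.
destruct (dist_reach n q Hconn x y Hx Hy) as [_ H].
destruct (dist n q x y) as [|k] eqn:E; [lia|]. simpl in H.
apply existsb_exists in H. destruct H as [w [Hw Hb]].
apply andb_true_iff in Hb. destruct Hb as [Ha Hr]. apply in_seq in Hw.
exists w. split; [lia|]. split; [apply adjb_pos; auto|].
pose proof (dist_le n q w y k Hr). lia.
Qed.

Lemma fold_max_ge {A} (g : A -> nat) l a : In a l -> (g a <= fold_right Nat.max 0 (map g l))%nat.
Proof.
induction l as [|b l IH]; simpl; [tauto|]. intros [H|H]; [subst; lia|]. specialize (IH H). lia.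
Qed.

Lemma dist_le_diam n q x y : (x<n)%nat -> (y<n)%nat -> (dist n q x y <= diam n q)%nat.
Proof.
intros Hx Hy. unfold diam. apply (fold_max_ge (fun p => dist n q (fst p) (snd p)) _ (x,y)).
unfold vpairs. apply in_prod; apply in_seq; lia.
Qed.

Lemma fold_min_le (l : list R) h a : In a (h :: l) -> fold_right Rmin h l <= a.
Proof.
induction l as [|b l IH]; simpl; intros H.
- destruct H as [H|H]; [subst; lra| tauto].
- destruct H as [H|[H|H]].
  + subst. eapply Rle_trans; [apply Rmin_r| apply IH; simpl; auto].
  + subst. apply Rmin_l.
  + eapply Rle_trans; [apply Rmin_r| apply IH; simpl; auto].
Qed.

Lemma qmin_le n q x w : (x<n)%nat -> (w<n)%nat -> 0 < q x w -> qmin n q <= q x w.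
Proof.
intros Hx Hw Hq. unfold qmin.
assert (Hin : In (q x w) (map (fun p => q (fst p) (snd p))
            (filter (fun p => adjb q (fst p) (snd p)) (vpairs n)))).
{ apply (in_map (fun p => q (fst p) (snd p)) _ (x,w)). apply filter_In. split.
  - unfold vpairs. apply in_prod; apply in_seq; lia.
  - simpl. apply pos_adjb; auto. }
destruct (map _ _) as [|h t]; [destruct Hin|]. apply fold_min_le; auto.
Qed.

Lemma rho_conc (Dr s d: R) : (s <= d \/ d + 1 <= s) -> s*(2*Dr+2-s) <= d*(2*Dr+2-d) + (2*Dr+1-2*d)*(s-d).
Proof. intros H. assert (0 <= (s-d)*(s-d-1)) by (destruct H; nra). nra. Qed.
Lemma rho_drop (Dr k d : R): 0 <= k -> k + 1 <= d -> d <= Dr -> k*(2*Dr+2-k) <= d*(2*Dr+2-d) - (2*Dr+3-2*d).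
Proof. intros. assert (0 <= (d-k-1)*(2*Dr+2-2*d)) by nra. assert (0 <= (d-k-1)*(d-k+1)) by nra. nra. Qed.

Lemma lsum_minus (l : list nat) F G : fold_right Rplus 0 (map (fun y => F y - G y) l) =
  fold_right Rplus 0 (map F l) - fold_right Rplus 0 (map G l).
Proof. induction l as [|a l IH]; simpl; [lra| rewrite IH; lra]. Qed.
Lemma lsum_scal (l : list nat) c F : fold_right Rplus 0 (map (fun y => c * F y) l) =
  c * fold_right Rplus 0 (map F l).
Proof. induction l as [|a l IH]; simpl; [lra| rewrite IH; lra]. Qed.
Lemma lsum_ext (l : list nat) F G : (forall y, In y l -> F y = G y) ->
  fold_right Rplus 0 (map F l) = fold_right Rplus 0 (map G l).
Proof. induction l as [|a l IH]; simpl; intros H; [lra| rewrite H, IH; auto]. Qed.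
Lemma lsum_nonneg (l : list nat) F : (forall y, In y l -> 0 <= F y) -> 0 <= fold_right Rplus 0 (map F l).
Proof. induction l as [|a l IH]; simpl; intros H; [lra|]. pose proof (H a (or_introl eq_refl)).
  pose proof (IH (fun y Hy => H y (or_intror Hy))). lra. Qed.
Lemma lsum_ge_term (l : list nat) F a : (forall y, In y l -> 0 <= F y) -> In a l ->
  F a <= fold_right Rplus 0 (map F l).
Proof. induction l as [|b l IH]; simpl; intros H Ha; [tauto|].
  pose proof (lsum_nonneg l F (fun y Hy => H y (or_intror Hy))).
  pose proof (H b (or_introl eq_refl)).
  destruct Ha as [Ha|Ha]; [subst; lra|]. pose proof (IH (fun y Hy => H y (or_intror Hy)) Ha). lra. Qed.

Lemma lap_diff n q f h w : laplacian n q f w - laplacian n q h w =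
  vsum n (fun z => q w z * ((f z - h z) - (f w - h w))).
Proof. unfold laplacian, vsum. rewrite <- lsum_minus. apply lsum_ext. intros; ring. Qed.

Lemma lap_scal n q h a w : a <> 0 -> laplacian n q (fun v => h v / a) w = laplacian n q h w / a.
Proof. intros Ha. unfold laplacian, vsum. assert (E: forall X, X / a = /a * X) by (intros; unfold Rdiv; ring). rewrite (E (fold_right Rplus 0 (map (fun y => q w y * (h y - h w)) (seq 0 n)))), <- lsum_scal.
  apply lsum_ext. intros; field; auto. Qed.

Lemma fmin_le (l : list nat) F i z : In z l -> fold_right Rmin i (map F l) <= F z.
Proof. induction l as [|a l IH]; simpl; [tauto|]. intros [H|H].
  - subst. apply Rmin_l.
  - eapply Rle_trans; [apply Rmin_r| auto]. Qed.
Lemma fmin_le_init (l : list nat) F i : fold_right Rmin i (map F l) <= i.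
Proof. induction l as [|a l IH]; simpl; [lra|]. eapply Rle_trans; [apply Rmin_r| auto]. Qed.
Lemma fmin_ge (l : list nat) F i b : b <= i -> (forall z, In z l -> b <= F z) -> b <= fold_right Rmin i (map F l).
Proof. induction l as [|a l IH]; simpl; intros Hi H; [lra|]. apply Rmin_glb; auto. Qed.

Lemma argmax {A} (l : list A) (r : A -> R) : l <> [] -> exists a, In a l /\ forall b, In b l -> r b <= r a.
Proof.
induction l as [|a l IH]; intros Hne; [congruence|].
destruct l as [|a' l'].
- exists a. split; [simpl; auto|]. intros b [Hb|[]]; subst; lra.
- destruct (IH ltac:(discriminate)) as [m [Hm Hmax]].
  destruct (Rle_lt_dec (r a) (r m)).
  + exists m. split; [right; auto|]. intros b [Hb|Hb]; [subst; auto| auto].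
  + exists a. split; [left; auto|]. intros b [Hb|Hb]; [subst; lra| pose proof (Hmax b Hb); lra].
Qed.

Lemma abs_ratio a k : 0 < k -> -k <= a <= k -> Rabs (a / k) <= 1.
Proof.
intros Hk [H1 H2]. apply Rabs_le. split.
- apply (Rmult_le_reg_r k); auto. unfold Rdiv. rewrite Rmult_assoc, Rinv_l; lra.
- apply (Rmult_le_reg_r k); auto. unfold Rdiv. rewrite Rmult_assoc, Rinv_l; lra.
Qed.

Lemma ln2_lt_1 : ln 2 < 1.
Proof. rewrite <- (ln_exp 1). apply ln_increasing; [lra|]. pose proof (exp_ineq1 1 ltac:(lra)). lra. Qed.
Ltac fnz := repeat split; try (apply Rgt_not_eq; lra); try (apply Rlt_not_eq; lra).

Theorem mainTheorem17 (n : nat) (q : nat -> nat -> R)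
  (Hq : forall x y, (x < n)%nat -> (y < n)%nat -> 0 <= q x y)
  (Hconn : connected n q)
  (Hrev : reversible n q)
  (Hcurv : ollivier_nonneg n q) :
  forall lam : R, lam <> 0 -> is_eigenvalue_negLap n q lam ->
    ln 2 * qmin n q / INR (diam n q) ^ 2 <= lam.
Proof.
intros lam Hlam [f [[x0 [Hx0 Hfx0]] Heig]].
destruct (classic (exists u v, (u<n)%nat /\ (v<n)%nat /\ f u < f v)) as [Hex|Hnex].
2: { exfalso.
  assert (Hc : forall v, (v < n)%nat -> f v = f x0).
  { intros v Hv. destruct (Rtotal_order (f v) (f x0)) as [H|[H|H]]; auto;
    exfalso; apply Hnex; [exists v, x0 | exists x0, v]; auto. }
  assert (HL : laplacian n q f x0 = 0).
  { unfold laplacian, vsum. transitivity (fold_right Rplus 0 (map (fun _ : nat => 0) (seq 0 n))).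
    - apply lsum_ext. intros y Hy. apply in_seq in Hy. rewrite (Hc y ltac:(lia)). ring.
    - clear. induction (seq 0 n); simpl; lra. }
  pose proof (Heig x0 Hx0) as E. rewrite HL in E.
  assert (lam * f x0 = 0) by lra. apply Rmult_integral in H. tauto. }
set (Dm := diam n q).
set (rho := fun s : nat => INR s * (2 * INR Dm + 2 - INR s)).
set (P := filter (fun p => negb (Nat.eqb (fst p) (snd p))) (vpairs n)).
set (r := fun p : nat * nat => (f (snd p) - f (fst p)) / rho (dist n q (fst p) (snd p))).
assert (HinP : forall u v, (u<n)%nat -> (v<n)%nat -> u <> v -> In (u,v) P).
{ intros u v Hu Hv Huv. unfold P. apply filter_In. split.
  - unfold vpairs. apply in_prod; apply in_seq; lia.
  - simpl. apply Nat.eqb_neq in Huv. rewrite Huv. reflexivity. }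
assert (HPin : forall u v, In (u,v) P -> (u<n)%nat /\ (v<n)%nat /\ u <> v).
{ intros u v H. unfold P in H. apply filter_In in H. destruct H as [H1 H2].
  unfold vpairs in H1. apply in_prod_iff in H1. destruct H1 as [H1 H3].
  apply in_seq in H1. apply in_seq in H3. simpl in H2.
  destruct (Nat.eqb_spec u v); [discriminate|]. repeat split; auto; lia. }
assert (Hrho_pos : forall u v, (u<n)%nat -> (v<n)%nat -> u <> v -> 0 < rho (dist n q u v)).
{ intros u v Hu Hv Huv. pose proof (dist_pos n q Hconn u v Hu Hv Huv).
  pose proof (dist_le_diam n q u v Hu Hv). unfold rho.
  apply le_INR in H. apply le_INR in H0. fold Dm in H0. simpl in H. nra. }
destruct Hex as [u0 [v0 [Hu0 [Hv0 Hf0]]]].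
assert (Huv0 : u0 <> v0) by (intro; subst; lra).
destruct (argmax P r) as [[x y] [Hxy Hmax]].
{ intro HP. pose proof (HinP u0 v0 Hu0 Hv0 Huv0). rewrite HP in H. destruct H. }
destruct (HPin x y Hxy) as [Hx [Hy Hne]].
set (M := r (x,y)).
set (d := dist n q x y).
assert (Hd1 : (1 <= d)%nat) by (apply dist_pos; auto).
assert (HdD : (d <= Dm)%nat) by (apply dist_le_diam; auto).
assert (Hd1R : 1 <= INR d) by (apply le_INR in Hd1; simpl in Hd1; lra).
assert (HdDR : INR d <= INR Dm) by (apply le_INR; auto).
assert (Hrd : 0 < rho d) by (apply Hrho_pos; auto).
assert (HM : 0 < M).
{ pose proof (Hmax (u0,v0) (HinP u0 v0 Hu0 Hv0 Huv0)) as H.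
  pose proof (Hrho_pos u0 v0 Hu0 Hv0 Huv0). unfold r in H; simpl in H.
  assert (0 < (f v0 - f u0) / rho (dist n q u0 v0)).
  { unfold Rdiv. apply Rmult_lt_0_compat; [lra| apply Rinv_0_lt_compat; auto]. }
  unfold M, r; simpl; lra. }
assert (Hfxy : f y - f x = M * rho d).
{ unfold M, r, d; simpl. field. apply Rgt_not_eq. apply Hrd. }
assert (Hmod : forall u v, (u<n)%nat -> (v<n)%nat -> f v - f u <= M * rho (dist n q u v)).
{ intros u v Hu Hv. destruct (Nat.eq_dec u v) as [He|He].
  - subst. rewrite dist_refl. unfold rho. simpl. lra.
  - pose proof (Hmax (u,v) (HinP u v Hu Hv He)) as H. unfold r in H; simpl in H.
    pose proof (Hrho_pos u v Hu Hv He).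
    replace (f v - f u) with ((f v - f u) / rho (dist n q u v) * rho (dist n q u v)) by (field; fnz).
    change ((f y - f x) / rho (dist n q x y)) with M in H. apply Rmult_le_compat_r; lra. }
set (c := 2 * INR Dm + 1 - 2 * INR d).
assert (Hc1 : 1 <= c) by (unfold c; lra).
set (al := M * c).
assert (Hal : 0 < al) by (unfold al; nra).
assert (Hconc : forall s : nat, rho s <= rho d + c * (INR s - INR d)).
{ intros s. unfold rho, c. apply rho_conc.
  destruct (le_lt_dec s d) as [H|H]; [left; apply le_INR; auto| right].
  apply le_INR in H. rewrite S_INR in H. lra. }
assert (Hdrop : forall k : nat, (k + 1 <= d)%nat -> rho k <= rho d - (c + 2)).
{ intros k Hk. unfold rho, c. apply le_INR in Hk. rewrite plus_INR in Hk. simpl in Hk.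
  replace (2 * INR Dm + 1 - 2 * INR d + 2) with (2 * INR Dm + 3 - 2 * INR d) by ring.
  apply rho_drop; [apply pos_INR| lra | lra]. }
assert (HMB : forall u v, (u<n)%nat -> (v<n)%nat ->
          f v - f u <= M * rho d + al * (INR (dist n q u v) - INR d)).
{ intros u v Hu Hv. pose proof (Hmod u v Hu Hv). pose proof (Hconc (dist n q u v)).
  unfold al. nra. }
set (h := fun v => fold_right Rmin (f x + al * INR (dist n q x v))
                    (map (fun z => f z + al * INR (dist n q z v)) (seq 0 n))).
assert (Hm1 : forall v z, (z<n)%nat -> h v <= f z + al * INR (dist n q z v)).
{ intros v z Hz. unfold h.
  apply (fmin_le _ (fun z => f z + al * INR (dist n q z v))). apply in_seq; lia. }
assert (Hm2 : forall v, h v <= f x + al * INR (dist n q x v)).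
{ intros v. unfold h. apply fmin_le_init. }
assert (Hm3 : forall v b, (forall z, (z<n)%nat -> b <= f z + al * INR (dist n q z v)) -> b <= h v).
{ intros v b H. unfold h. apply fmin_ge; auto. intros z Hz. apply in_seq in Hz. apply H; lia. }
assert (Hlip : forall v v', (v<n)%nat -> (v'<n)%nat -> h v <= h v' + al * INR (dist n q v' v)).
{ intros v v' Hv Hv'. cut (h v - al * INR (dist n q v' v) <= h v'); [lra|].
  apply Hm3. intros z Hz. pose proof (Hm1 v z Hz).
  pose proof (dist_tri n q Hconn z v' v Hz Hv' Hv) as T. apply le_INR in T. rewrite plus_INR in T.
  nra. }
assert (Hhf : forall w, (w<n)%nat -> h w <= f w).
{ intros w Hw. pose proof (Hm1 w w Hw). rewrite dist_refl in H. simpl in H. lra. }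
assert (Hhy1 : f x + al * INR d <= h y).
{ apply Hm3. intros z Hz. pose proof (HMB z y Hz Hy). lra. }
assert (Hhy2 : h y <= h x + al * INR d) by (apply Hlip; auto).
assert (Hhx : h x = f x) by (pose proof (Hhf x Hx); lra).
assert (Hhy : h y = f x + al * INR d) by lra.
assert (Hhlow : forall v, (v<n)%nat -> f v + al * INR d - M * rho d <= h v).
{ intros v Hv. apply Hm3. intros z Hz. pose proof (HMB z v Hz Hv). lra. }
set (H := fun v => h v / al).
assert (Hdsym : dist n q y x = d) by (unfold d; symmetry; apply dist_sym; auto).
assert (HdR : 0 < INR d) by lra.
assert (HgradH : grad n q H y x = 1).
{ unfold grad, H. rewrite Hdsym, Hhy, Hhx. field. split; lra. }
assert (Hsup : grad_sup_eq1 n q H).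
{ split.
  - intros u v Hu Hv Huv. unfold grad, H.
    pose proof (dist_pos n q Hconn u v Hu Hv Huv) as Hp. apply le_INR in Hp. simpl in Hp.
    replace ((h u / al - h v / al) / INR (dist n q u v)) with
      ((h u - h v) / (al * INR (dist n q u v))) by (field; fnz).
    apply abs_ratio; [nra|].
    pose proof (Hlip u v Hu Hv) as L1. pose proof (Hlip v u Hv Hu) as L2.
    rewrite (dist_sym n q Hconn Hrev v u Hv Hu) in L1. lra.
  - exists y, x. repeat split; auto. rewrite HgradH. apply Rabs_R1. }
pose proof (Hcurv x y Hx Hy Hne H Hsup HgradH) as Hk.
unfold grad in Hk. fold d in Hk.
unfold H in Hk. rewrite !lap_scal in Hk by fnz.
assert (Hcv : laplacian n q h y <= laplacian n q h x).
{ assert (0 <= (laplacian n q h x / al - laplacian n q h y / al)).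
  { replace (laplacian n q h x / al - laplacian n q h y / al) with
      ((laplacian n q h x / al - laplacian n q h y / al) / INR d * INR d) by (field; fnz).
    apply Rmult_le_pos; lra. }
  replace (laplacian n q h x / al - laplacian n q h y / al) with
      ((laplacian n q h x - laplacian n q h y) * / al) in H0 by (field; fnz).
  assert (0 < / al) by (apply Rinv_0_lt_compat; auto). nra. }
destruct (dist_geo n q Hconn x y Hx Hy Hne) as [w0 [Hw0 [Hqw0 Hgw0]]].
destruct (dist_geo n q Hconn y x Hy Hx (not_eq_sym Hne)) as [v0' [Hv0' [Hqv0 Hgv0]]].
fold d in Hgw0. rewrite Hdsym in Hgv0.
assert (HA : q x w0 * (2 * M) <= laplacian n q f x - laplacian n q h x).
{ rewrite lap_diff. rewrite Hhx. unfold vsum.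
  assert (Hge : 2 * M <= (f w0 - h w0) - (f x - f x)).
  { pose proof (Hm2 w0). pose proof (dist_adj n q x w0 Hw0 Hqw0) as Ha. apply le_INR in Ha. simpl in Ha.
    pose proof (Hmod w0 y Hw0 Hy). pose proof (Hdrop (dist n q w0 y) Hgw0).
    assert (al * INR (dist n q x w0) <= al) by nra.
    unfold al in *. nra. }
  eapply Rle_trans; [| apply (lsum_ge_term _ (fun z => q x z * (f z - h z - (f x - f x))) w0)].
  - pose proof (Hq x w0 Hx Hw0). simpl. nra.
  - intros z Hz. apply in_seq in Hz. apply Rmult_le_pos; [apply Hq; lia|].
    pose proof (Hhf z ltac:(lia)). lra.
  - apply in_seq; lia. }
assert (HB : q y v0' * (2 * M) <= laplacian n q h y - laplacian n q f y).
{ replace (laplacian n q h y - laplacian n q f y) with (laplacian n q h y - laplacian n q f y) by ring.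
  rewrite lap_diff. rewrite Hhy. unfold vsum.
  assert (Hge : 2 * M <= (h v0' - f v0') - (f x + al * INR d - f y)).
  { pose proof (Hlip y v0' Hy Hv0') as Hl.
    pose proof (dist_adj n q y v0' Hv0' Hqv0) as Ha.
    rewrite (dist_sym n q Hconn Hrev v0' y Hv0' Hy) in Hl.
    apply le_INR in Ha. simpl in Ha.
    assert (al * INR (dist n q y v0') <= al) by nra.
    pose proof (Hmod x v0' Hx Hv0') as Hmx.
    rewrite (dist_sym n q Hconn Hrev x v0' Hx Hv0') in Hmx.
    pose proof (Hdrop (dist n q v0' x) Hgv0).
    unfold al in *. nra. }
  eapply Rle_trans; [| apply (lsum_ge_term _ (fun z => q y z * (h z - f z - (f x + al * INR d - f y))) v0')].
  - pose proof (Hq y v0' Hy Hv0'). simpl. nra.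
  - intros z Hz. apply in_seq in Hz. apply Rmult_le_pos; [apply Hq; lia|].
    pose proof (Hhlow z ltac:(lia)). lra.
  - apply in_seq; lia. }
assert (Hev : laplacian n q f x - laplacian n q f y = lam * (M * rho d)).
{ pose proof (Heig x Hx). pose proof (Heig y Hy). rewrite <- Hfxy. lra. }
assert (Hmain : 2 * q x w0 + 2 * q y v0' <= lam * rho d).
{ assert (M * (2 * q x w0 + 2 * q y v0') <= M * (lam * rho d)) by nra.
  apply Rmult_le_reg_l in H0; auto. }
pose proof (qmin_le n q x w0 Hx Hw0 Hqw0).
pose proof (qmin_le n q y v0' Hy Hv0' Hqv0).
assert (Hlampos : 0 < lam) by nra.
assert (HD1 : 1 <= INR Dm) by lra.
assert (HD2 : 0 < INR Dm ^ 2) by (simpl; nra).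
pose proof ln2_lt_1. pose proof ln_lt_2.
assert (Hgoal : ln 2 * qmin n q <= lam * INR Dm ^ 2).
{ destruct (Rle_lt_dec (qmin n q) 0).
  - assert (ln 2 * qmin n q <= 0) by nra. nra.
  - assert (Hr3 : rho d <= 3 * INR Dm ^ 2) by (unfold rho; simpl; nra).
    nra. }
unfold Rdiv. apply (Rmult_le_reg_r (INR Dm ^ 2)); auto.
rewrite Rmult_assoc, Rinv_l by lra. lra.
Qed.
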